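(* Let $G$ be a connected graph with a list-assignment $L$ such that $|L(u)|\ge\deg(u)+1$ for all $u\in V(G)$, and let $\alpha,\beta$ be $L$-colourings of $G$. Suppose there exist $v\in V(G)$ and distinct $w_1,w_2\in N(v)$ such that $\alpha(w_1)=\beta(w_1)$, $\alpha(w_1)=\alpha(w_2)$, $\beta(w_1)=\beta(w_2)$, and $G-\{w_1,w_2\}$ is connected. Then $\alpha\sim\beta$; furthermore, there exists a recolouring sequence from $\alpha$ to $\beta$ that recolours neither $w_1$ nor $w_2$.
   Context: An $L$-colouring is a proper colouring $\varphi$ with $\varphi(v)\in L(v)$ for all $v$. $\alpha\sim\beta$ means $\alpha$ can be transformed into $\beta$ by a sequence of single-vertex recolouring steps, each changing the colour of one vertex to another colour of its list and keeping the colouring a proper $L$-colouring. (In the paper's terminology, $w_1,w_2$ is a ''very good pair'' for $v$ with respect to both $\alpha$ and $\beta$.) *)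

(* Defs.v *)
From mathcomp Require Import all_boot.
Set Implicit Arguments. Unset Strict Implicit. Unset Printing Implicit Defensive.

(* Colours live in an arbitrary eqType C;
   lists L : T -> seq C (the list L(u) is the set of its elements). *)

Definition simple_graph (T : finType) (e : rel T) : Prop :=
  symmetric e /\ irreflexive e.

Definition deg (T : finType) (e : rel T) (u : T) : nat := #|[set x | e u x]|.

Definition lsize (C : eqType) (l : seq C) : nat := size (undup l).

Definition connected_graph (T : finType) (e : rel T) : Prop :=
  forall x y : T, connect e x y.

Definition connected_minus (T : finType) (e : rel T) (W : pred T) : Prop :=
  forall x y : T, x \notin W -> y \notin W ->
    connect [rel a b | [&& e a b, a \notin W & b \notin W]] x y.

Definition Lcolouring (T : finType) (C : eqType) (e : rel T) (L : T -> seq C)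
  (phi : T -> C) : Prop :=
  (forall v, phi v \in L v) /\ (forall u v, e u v -> phi u != phi v).

Definition recol_step (T : finType) (C : eqType) (e : rel T) (L : T -> seq C)
  (x : T) (phi psi : T -> C) : Prop :=
  [/\ Lcolouring e L phi, Lcolouring e L psi, phi x != psi x &
      forall y, y != x -> phi y = psi y].

Inductive recol_seq (T : finType) (C : eqType) (e : rel T) (L : T -> seq C)
  (A : pred T) : (T -> C) -> (T -> C) -> Prop :=
| recol_refl phi : Lcolouring e L phi -> recol_seq e L A phi phi
| recol_cons phi chi psi x :
    x \in A -> recol_step e L x phi chi -> recol_seq e L A chi psi ->
    recol_seq e L A phi psi.

Definition recolourable (T : finType) (C : eqType) (e : rel T) (L : T -> seq C)
  (alpha beta : T -> C) : Prop := recol_seq e L predT alpha beta.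

(* Main.v *)
Require Import Defs.
From mathcomp Require Import all_boot.
From Stdlib Require Import FunctionalExtensionality.
From mathcomp Require Import zify.
Set Implicit Arguments. Unset Strict Implicit. Unset Printing Implicit Defensive.

Lemma lsize_sub (C : eqType) (l1 l2 : seq C) : {subset l1 <= l2} -> lsize l1 <= lsize l2.
Proof.
move=> H; apply: uniq_leq_size; first exact: undup_uniq.
by move=> x; rewrite !mem_undup; apply: H.
Qed.

Lemma lsize_cat (C : eqType) (ex l : seq C) : lsize (ex ++ l) <= size ex + lsize l.
Proof.
elim: ex => [|c ex IH] //=; rewrite /lsize /=.
by case: ifP => _ /=; [apply: leq_trans IH _|]; rewrite ?ltnS.
Qed.

Lemma lsize_pos (C : eqType) (l : seq C) : 0 < lsize l -> exists c, c \in l.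
Proof. by case: l => [|c l] //= _; exists c; rewrite inE eqxx. Qed.

Section Main.
Variables (T : finType) (C : eqType) (e : rel T) (L : T -> seq C).
Hypothesis esym : symmetric e.
Hypothesis eirr : irreflexive e.

Lemma recol_mono (A B : pred T) phi psi : {subset A <= B} ->
  recol_seq e L A phi psi -> recol_seq e L B phi psi.
Proof.
move=> AB; elim=> [p Hp|p q r x xA st _ IH]; first exact: recol_refl.
exact: (recol_cons (AB _ xA) st IH).
Qed.

Lemma recol_trans (A : pred T) phi chi psi :
  recol_seq e L A phi chi -> recol_seq e L A chi psi -> recol_seq e L A phi psi.
Proof.
elim=> [//|p q r x xA st _ IH] H; exact: (recol_cons xA st (IH H)).
Qed.

Definition degS (S : {set T}) x := #|[set y in S | e x y]|.

Lemma degS_D1 S u x : degS S x = degS (S :\ u) x + ((u \in S) && e x u).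
Proof.
rewrite /degS (cardsD1 u [set y in S | e x y]) addnC inE; congr (_ + _).
by apply: eq_card => y; rewrite !inE andbA.
Qed.

Definition availP (P : T -> C -> bool) (f : T -> C) (S : {set T}) x :=
  [seq c <- L x | P x c && [forall y, (e x y && (y \notin S)) ==> (f y != c)]].

Lemma availP_P P f S x d : d \in availP P f S x -> P x d.
Proof. by rewrite mem_filter => /andP[/andP[]]. Qed.

Lemma availP_L P f S x d : d \in availP P f S x -> d \in L x.
Proof. by rewrite mem_filter => /andP[]. Qed.

Lemma availP_out P f S x d y : d \in availP P f S x -> e x y -> y \notin S -> f y != d.
Proof.
rewrite mem_filter => /andP[/andP[_ /forallP H] _] exy yS.
by move: (H y); rewrite exy yS.
Qed.

Lemma avail_sub (P P' : T -> C -> bool) f f' S u x d : d \in availP P f S x -> P' x d ->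
  (forall y, y \notin S -> f' y = f y) -> (e x u -> f' u != d) ->
  d \in availP P' f' (S :\ u) x.
Proof.
move=> dA P'd hf hu; rewrite mem_filter P'd (availP_L dA) andbT /=.
apply/forallP => y; apply/implyP => /andP[exy]; rewrite !inE negb_and negbK => /orP[/eqP yu|yS]; first by subst y; exact: hu exy.
by rewrite hf //; apply: availP_out dA exy yS.
Qed.

Lemma transfer (P P' : T -> C -> bool) f f' S u x (ex : seq C) :
  (forall d, d \in availP P f S x -> (e x u ==> (d \notin ex)) ->
     d \in availP P' f' (S :\ u) x) ->
  lsize (availP P f S x) <= lsize (availP P' f' (S :\ u) x) + (e x u) * size ex.
Proof.
move=> H; case exu: (e x u); last first.
  rewrite mul0n addn0; apply: lsize_sub => d dA; apply: H dA _; by rewrite exu.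
rewrite mul1n addnC; apply: leq_trans (lsize_cat _ _).
apply: lsize_sub => d dA; rewrite mem_cat.
case dex: (d \in ex) => //=; apply: H dA _; by rewrite exu dex.
Qed.


Section Rec.
Variables (v : T) (r : T -> nat).

Definition ranked (S : {set T}) := forall x, x \in S -> x != v ->
  exists2 y, (y \in S) && e x y & r y < r x.

Lemma pick S x : ranked S -> x \in S -> x != v ->
  exists u, [/\ u \in S, u != v & ranked (S :\ u)].
Proof.
move=> rk xS xv.
have xA : x \in S :\ v by rewrite !inE xv.
case: (arg_maxnP r xA) => u uA umax.
have uA' : u \in S :\ v := uA.
move: (uA'); rewrite !inE => /andP[uv uS].
exists u; split => //.
move=> y; rewrite !inE => /andP[yu yS] yv.
have [z /andP[zS eyz] rz] := rk y yS yv.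
exists z => //; rewrite !inE zS eyz !andbT.
apply/eqP => zu; subst z.
have yA : y \in S :\ v by rewrite !inE yv yS.
have h : r y <= r u := umax y yA.
by move: rz; rewrite ltnNge h.
Qed.

Lemma Eex n : forall (S : {set T}) (f : T -> C) (P : T -> C -> bool),
 #|S| <= n -> ranked S ->
 (forall x, x \notin S -> f x \in L x) ->
 (forall x y, x \notin S -> y \notin S -> e x y -> f x != f y) ->
 (forall x, x \in S -> degS S x <= lsize (availP P f S x)) ->
 (v \in S -> degS S v < lsize (availP P f S v)) ->
 exists g, [/\ Lcolouring e L g, (forall x, x \notin S -> g x = f x)
            & (forall x, x \in S -> P x (g x))].
Proof.
elim: n => [|n IH] S f P Sn rk fL fpr hsl hv.
  move: Sn; rewrite leqn0 cards_eq0 => /eqP S0; subst S.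
  exists f; split => //; last by move=> x; rewrite inE.
  by split; [move=> x; apply: fL; rewrite inE | move=> x y; apply: fpr; rewrite inE].
case: (eqVneq S set0) => [S0|Sn0].
  subst S; exists f; split => //; last by move=> x; rewrite inE.
  by split; [move=> x; apply: fL; rewrite inE | move=> x y; apply: fpr; rewrite inE].
have [u [uS rku cpos]] : exists u, [/\ u \in S, ranked (S :\ u)
                                   & 0 < lsize (availP P f S u)].
  case: (pickP (fun x => (x \in S) && (x != v))) => [x /andP[xS xv]|none].
    have [u [uS uv rku]] := pick rk xS xv.
    exists u; split => //.
    have [y /andP[yS euy] _] := rk u uS uv.
    apply: leq_trans (hsl u uS); rewrite /degS card_gt0; apply/set0Pn.
    by exists y; rewrite inE yS euy.
  have [y yS] := set0Pn _ Sn0.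
  have yv : y = v by move: (none y); rewrite yS /= => /negbFE/eqP.
  subst y; exists v; split => //.
    by move=> z; rewrite !inE => /andP[zv zS] zv'; move: (none z); rewrite zS zv'.
  by apply: leq_ltn_trans (hv yS).
have [c cA] := lsize_pos cpos.
pose f' := fun y => if y == u then c else f y.
have hf : forall y, y \notin S -> f' y = f y.
  by move=> y yS; rewrite /f'; case: eqVneq => // yu; subst; rewrite uS in yS.
have memb : forall x d, d \in availP P f S x -> (e x u ==> (d \notin [:: c])) ->
   d \in availP P f' (S :\ u) x.
  move=> x d dA /implyP hex; apply: avail_sub dA (availP_P dA) hf _.
  by move=> exu; rewrite /f' eqxx; have := hex exu; rewrite inE eq_sym.
have c1 : #|S :\ u| <= n by move: Sn; rewrite (cardsD1 u S) uS add1n ltnS.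
have c3 : forall x, x \notin S :\ u -> f' x \in L x.
  move=> x; rewrite /f' !inE; case: (eqVneq x u) => [->|xu] /= => [_|xS].
    exact: availP_L cA.
  exact: fL.
have c4 : forall x y, x \notin S :\ u -> y \notin S :\ u -> e x y -> f' x != f' y.
  move=> x y; rewrite /f' !inE; case: (eqVneq x u) => [->|xu];
    case: (eqVneq y u) => [->|yu] //=.
  + by rewrite eirr.
  + by move=> _ yS euy; rewrite eq_sym; apply: availP_out cA euy yS.
  + by move=> xS _ exu; apply: availP_out cA _ xS; rewrite esym.
  + exact: fpr.
have c5 : forall x, x \in S :\ u -> degS (S :\ u) x <= lsize (availP P f' (S :\ u) x).
  move=> x; rewrite inE => /andP[xu xS].
  have h1 := hsl x xS; rewrite (degS_D1 S u x) uS /= in h1.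
  have h2 := transfer (memb x).
  move: h1 h2; case: (e x u) => /= h1 h2; lia.
have c6 : v \in S :\ u -> degS (S :\ u) v < lsize (availP P f' (S :\ u) v).
  move=> vS'; have vS : v \in S by move: vS'; rewrite inE => /andP[].
  have h1 := hv vS; rewrite (degS_D1 S u v) uS /= in h1.
  have h2 := transfer (memb v).
  move: h1 h2; case: (e v u) => /= h1 h2; lia.
have [g [gL gout gP]] := IH (S :\ u) f' P c1 rku c3 c4 c5 c6.
exists g; split => //.
- move=> x xS; have xu : x != u by apply: contraNneq xS => ->.
  by rewrite gout ?inE ?negb_and ?xS ?orbT // /f' (negbTE xu).
- move=> x xS; case: (eqVneq x u) => [->|xu].
    by rewrite gout ?setD11 // /f' eqxx; apply: availP_P cA.
  by apply: gP; rewrite !inE; apply/andP; split.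
Qed.


Definition T1 : T -> C -> bool := fun _ _ => true.

Lemma Krec n : forall (S : {set T}) (a b : T -> C),
  #|S| <= n -> v \in S -> ranked S -> Lcolouring e L a -> Lcolouring e L b ->
  (forall x, x \notin S -> a x = b x) ->
  (forall x, x \in S -> degS S x < lsize (availP T1 a S x)) ->
  degS S v + 1 < lsize (availP T1 a S v) ->
  recol_seq e L [pred x | x \in S] a b.
Proof.
elim: n => [|n IH] S a b Sn vS rk aL bL ab hsl hv.
  by move: Sn; rewrite leqn0 cards_eq0 => /eqP S0; subst S; rewrite inE in vS.
case: (pickP (fun x => (x \in S) && (x != v))) => [x /andP[xS xv]|none]; last first.
  have eqo' : forall y, y != v -> a y = b y.
    move=> y yv; case yS: (y \in S); last by apply: ab; rewrite yS.
    by move: (none y); rewrite yS yv.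
  case: (eqVneq (a v) (b v)) => [eqv|nev].
    have -> : a = b.
      apply: functional_extensionality => y.
      by case: (eqVneq y v) => [->//|yv]; apply: eqo'.
    exact: recol_refl.
  apply: (@recol_cons _ _ _ _ _ _ b b v).
  - by rewrite inE.
  - by split => // y yv; apply: eqo'.
  - exact: recol_refl.
have [u [uS uv rku]] := pick rk xS xv.
clear x xS xv.
have vS' : v \in S :\ u by rewrite !inE eq_sym uv vS.
have c1 : #|S :\ u| <= n by move: Sn; rewrite (cardsD1 u S) uS add1n ltnS.
case: aL => aL1 aL2; case: bL => bL1 bL2.
pose P := fun x d => ~~ e u x || (d != b u).
have memb1 : forall x d, d \in availP T1 a S x ->
    (e x u ==> (d \notin [:: a u; b u])) -> d \in availP P a (S :\ u) x.
  move=> x d dA /implyP hex; apply: avail_sub dA _ _ _ => //.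
    rewrite /P; case eux: (e u x) => //=.
    have exu : e x u by rewrite esym.
    by have := hex exu; rewrite !inE negb_or => /andP[].
  move=> exu; have := hex exu; rewrite !inE negb_or => /andP[h _].
  by rewrite eq_sym.
have [g [gL gout gP]] : exists g, [/\ Lcolouring e L g,
    (forall x, x \notin S :\ u -> g x = a x) & (forall x, x \in S :\ u -> P x (g x))].
  apply: (@Eex #|S :\ u| (S :\ u) a P (leqnn _) rku).
  - by move=> y _; apply: aL1.
  - by move=> y z _ _; apply: aL2.
  - move=> x; rewrite inE => /andP[xu xS].
    have h1 := hsl x xS; rewrite (degS_D1 S u x) uS /= in h1.
    have h2 := transfer (memb1 x).
    move: h1 h2; case: (e x u) => /= h1 h2; lia.
  - move=> _; have h1 := hv; rewrite (degS_D1 S u v) uS /= in h1.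
    have h2 := transfer (memb1 v).
    move: h1 h2; case: (e v u) => /= h1 h2; lia.
have SS' : {subset [pred y | y \in S :\ u] <= [pred y | y \in S]}.
  by move=> y; rewrite !inE => /andP[].
have memb2 : forall x d, d \in availP T1 a S x ->
    (e x u ==> (d \notin [:: a u])) -> d \in availP T1 a (S :\ u) x.
  move=> x d dA /implyP hex; apply: avail_sub dA _ _ _ => //.
  by move=> exu; have := hex exu; rewrite !inE eq_sym.
have s1 : recol_seq e L [pred y | y \in S] a g.
  apply: recol_mono SS' _.
  apply: (IH (S :\ u) a g c1 vS' rku (conj aL1 aL2) gL).
  - by move=> x xS; rewrite (gout x xS).
  - move=> x; rewrite inE => /andP[xu xS].
    have h1 := hsl x xS; rewrite (degS_D1 S u x) uS /= in h1.
    have h2 := transfer (memb2 x).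
    move: h1 h2; case: (e x u) => /= h1 h2; lia.
  - have h1 := hv; rewrite (degS_D1 S u v) uS /= in h1.
    have h2 := transfer (memb2 v).
    move: h1 h2; case: (e v u) => /= h1 h2; lia.
have gb : forall z, e u z -> b u != g z.
  move=> z euz; case zS': (z \in S :\ u).
    by have := gP z zS'; rewrite /P euz /= eq_sym.
  have zu : z != u by apply/eqP => zu; subst z; rewrite eirr in euz.
  have zS : z \notin S by move: zS'; rewrite !inE zu /= => ->.
  by rewrite gout ?zS' // (ab z zS); apply: bL2.
have [g' [g'L g'u g'o s2]] : exists g', [/\ Lcolouring e L g', g' u = b u,
    (forall y, y != u -> g' y = g y) & recol_seq e L [pred y | y \in S] g g'].
  case: (eqVneq (g u) (b u)) => [gu|gu].
    by exists g; split => //; apply: recol_refl.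
  pose g' := fun y => if y == u then b u else g y.
  have g'L : Lcolouring e L g'.
    case: gL => gL1 gL2; split.
      by move=> y; rewrite /g'; case: eqP => [->|_]; [apply: bL1 | apply: gL1].
    move=> y z; rewrite /g'; case: (eqVneq y u) => [->|yu];
      case: (eqVneq z u) => [->|zu].
    + by rewrite eirr.
    + exact: gb.
    + by move=> eyu; rewrite eq_sym; apply: gb; rewrite esym.
    + exact: gL2.
  exists g'; split => //.
  - by rewrite /g' eqxx.
  - by move=> y yu; rewrite /g' (negbTE yu).
  - apply: (@recol_cons _ _ _ _ _ g g' g' u).
    + by rewrite inE.
    + split => //; first by rewrite /g' eqxx.
      by move=> y yu; rewrite /g' (negbTE yu).
    + exact: recol_refl.
have hfo : forall y, y \notin S -> g' y = a y.
  move=> y yS; have yu : y != u by apply: contraNneq yS => ->.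
  by rewrite g'o // gout // !inE (negbTE yS) andbF.
have memb3 : forall x d, d \in availP T1 a S x ->
    (e x u ==> (d \notin [:: b u])) -> d \in availP T1 g' (S :\ u) x.
  move=> x d dA /implyP hex; apply: avail_sub dA _ hfo _ => //.
  by move=> exu; have := hex exu; rewrite !inE g'u eq_sym.
have s3 : recol_seq e L [pred y | y \in S] g' b.
  apply: recol_mono SS' _.
  apply: (IH (S :\ u) g' b c1 vS' rku g'L (conj bL1 bL2)).
  - move=> y; rewrite !inE negb_and negbK => /orP[/eqP->//|yS].
    by rewrite hfo // ab.
  - move=> x; rewrite inE => /andP[xu xS].
    have h1 := hsl x xS; rewrite (degS_D1 S u x) uS /= in h1.
    have h2 := transfer (memb3 x).
    move: h1 h2; case: (e x u) => /= h1 h2; lia.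
  - have h1 := hv; rewrite (degS_D1 S u v) uS /= in h1.
    have h2 := transfer (memb3 v).
    move: h1 h2; case: (e v u) => /= h1 h2; lia.
exact: recol_trans s1 (recol_trans s2 s3).
Qed.

End Rec.
End Main.

Lemma rank_exists (T : finType) (e : rel T) (esym : symmetric e) (S : {set T}) (w : T) :
  (forall x, x \in S -> connect [rel a b | [&& e a b, a \in S & b \in S]] w x) ->
  exists r : T -> nat, ranked e w r S.
Proof.
move=> H.
set eS := [rel a b | [&& e a b, a \in S & b \in S]] in H.
pose Pn x n := [exists p : n.-tuple T, path eS w p && (last w p == x)]
               || ~~ connect eS w x.
have exP : forall x, exists n, Pn x n.
  move=> x; case cx: (connect eS w x); last by exists 0; rewrite /Pn cx orbT.
  move/connectP: cx => [p pp px]; exists (size p); apply/orP; left.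
  by apply/existsP; exists (in_tuple p); rewrite /= pp px eqxx.
exists (fun x => ex_minn (exP x)).
move=> x xS xw.
case: (ex_minnP (exP x)) => m Pm minm.
have cx := H x xS.
move: Pm; rewrite /Pn cx orbF => /existsP [[s /eqP sz] /andP[/= pp /eqP px]].
move: sz pp px; case/lastP: s => [|q y] sz pp px.
  by move: xw; rewrite -px /= eqxx.
rewrite last_rcons in px; subst y.
rewrite rcons_path in pp; case/andP: pp => pq /and3P[eyx yS _].
exists (last w q); first by rewrite yS esym eyx.
case: (ex_minnP (exP (last w q))) => k Pk mink.
apply: leq_ltn_trans (mink (size q) _) _.
  apply/orP; left; apply/existsP; exists (in_tuple q); by rewrite /= pq eqxx.
by rewrite -sz size_rcons.
Qed.

Theorem mainTheorem9 (T : finType) (C : eqType) (e : rel T) (L : T -> seq C)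
  (alpha beta : T -> C) (v w1 w2 : T) :
  simple_graph e ->
  connected_graph e ->
  (forall u, deg e u + 1 <= lsize (L u)) ->
  Lcolouring e L alpha -> Lcolouring e L beta ->
  e v w1 -> e v w2 -> w1 != w2 ->
  alpha w1 = beta w1 -> alpha w1 = alpha w2 -> beta w1 = beta w2 ->
  connected_minus e (mem [:: w1; w2]) ->
  recolourable e L alpha beta /\
  recol_seq e L [pred x | x \notin [:: w1; w2]] alpha beta.
Proof.
move=> [esym eirr] _ hdeg aL bL ev1 ev2 w12 ab1 aa bb cm.
pose S := [set x | x \notin [:: w1; w2]].
have inS : forall x, (x \in S) = (x != w1) && (x != w2).
  by move=> x; rewrite !inE negb_or.
have vS : v \in S.
  rewrite inS; apply/andP; split; apply/eqP => h; subst v;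
    by rewrite eirr in ev1 ev2.
have conS : forall x, x \in S ->
    connect [rel a b | [&& e a b, a \in S & b \in S]] v x.
  move=> x xS.
  have vS0 : v \notin [:: w1; w2] by move: vS; rewrite inE.
  have xS0 : x \notin [:: w1; w2] by move: xS; rewrite inE.
  have := cm v x vS0 xS0.
  have E : [rel a b | [&& e a b, a \in S & b \in S]] =2
     [rel a b | [&& e a b, a \notin mem [:: w1; w2] & b \notin mem [:: w1; w2]]].
    by move=> a b /=; rewrite !inE.
  by rewrite (eq_connect E).
have [r rk] := rank_exists esym conS.
have outc : forall y, y \notin S -> alpha y = alpha w1 /\ beta y = alpha w1.
  by move=> y; rewrite inS negb_and !negbK => /orP[]/eqP->; split; congruence.
have degsplit : forall x, deg e x = degS e S x + #|[set y | e x y] :\: S|.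
  move=> x; rewrite /deg /degS -(cardsID S [set y | e x y]); congr (_ + _).
  by apply: eq_card => y; rewrite !inE andbC.
have sub1 : forall x, {subset L x <= alpha w1 :: availP e L (@T1 T C) alpha S x}.
  move=> x d dL; rewrite inE; case: eqP => //= /eqP dn.
  rewrite mem_filter dL andbT /T1 /=.
  apply/forallP => y; apply/implyP => /andP[_ yS].
  by have [-> _] := outc y yS; rewrite eq_sym.
have sub0 : forall x, #|[set y | e x y] :\: S| = 0 ->
    {subset L x <= availP e L (@T1 T C) alpha S x}.
  move=> x /eqP; rewrite cards_eq0 => /eqP h0 d dL.
  rewrite mem_filter dL andbT /T1 /=.
  apply/forallP => y; apply/implyP => /andP[exy yS].
  have : y \in [set y | e x y] :\: S by rewrite in_setD yS inE exy.
  by rewrite h0 inE.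
have hsl : forall x, x \in S -> degS e S x < lsize (availP e L (@T1 T C) alpha S x).
  move=> x xS; have h := hdeg x; rewrite degsplit in h.
  case k: #|[set y | e x y] :\: S| => [|k'].
    have h2 := lsize_sub (sub0 x k); rewrite k in h; lia.
  have h2 := leq_trans (lsize_sub (sub1 x)) (lsize_cat [:: alpha w1] _).
  rewrite k in h; simpl size in h2; lia.
have hv : degS e S v + 1 < lsize (availP e L (@T1 T C) alpha S v).
  have h := hdeg v; rewrite degsplit in h.
  have h3 : 2 <= #|[set y | e v y] :\: S|.
    have c2 : #|[set w1; w2]| = 2 by rewrite cards2 w12.
    rewrite -c2; apply: subset_leq_card; apply/subsetP => y.
    by rewrite !inE => /orP[]/eqP->; rewrite negbK ?ev1 ?ev2 ?eqxx ?orbT.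
  have h2 := leq_trans (lsize_sub (sub1 v)) (lsize_cat [:: alpha w1] _).
  simpl size in h2; lia.
have ag : forall x, x \notin S -> alpha x = beta x.
  by move=> x xS; have [-> ->] := outc x xS.
have K := Krec esym eirr (leqnn #|S|) vS rk aL bL ag hsl hv.
split.
  by apply: recol_mono K.
by apply: recol_mono K => y; rewrite !inE.
Qed.
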